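(* Let $\mathcal F=\{f_1,\dots,f_M\}$ be a frame for $\mathbb C^N$ with range of coefficients $W\subset\mathbb C^M$, and suppose $\mathbb M^{\mathcal F}$ is injective. Then for every $S\subset\{1,\dots,M\}$, if $L^S\cap W\neq\{0\}$ then $L^{S^\complement}\cap W=\{0\}$. Consequently, for every such $S$, either $\{f_j\}_{j\in S}$ or $\{f_j\}_{j\in S^\complement}$ spans $\mathbb C^N$.
   Context: A frame for $\mathbb C^N$ is a spanning family $\{f_1,\dots,f_M\}$; $W=\{(\langle x,f_k\rangle)_{k=1}^M : x\in\mathbb C^N\}$ with $\langle x,y\rangle=\sum_k x_k\overline{y_k}$. For $S\subset\{1,\dots,M\}$, $L^S=\{a\in\mathbb C^M: a_i=0\ \forall i\in S\}$ and $S^\complement$ is the complement. $\mathbb M^{\mathcal F}$ is injective means $|\langle x,f_k\rangle|=|\langle y,f_k\rangle|$ for all $k$ implies $y=cx$ for some $c\in\mathbb C$, $|c|=1$. *)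

(* Defs.v *)
From HB Require Import structures.
From mathcomp Require Import all_boot all_order all_algebra.
From mathcomp Require Import reals.
From mathcomp.real_closed Require Import complex.
Set Implicit Arguments. Unset Strict Implicit. Unset Printing Implicit Defensive.
Import Order.TTheory GRing.Theory Num.Theory.
Local Open Scope ring_scope.

Section FrameDefs.
Variables (R : realType) (N M : nat).
Local Notation C := R[i].

Definition cdot (x y : 'rV[C]_N) : C := \sum_(k < N) x 0 k * (y 0 k)^*.

Definition coeffs (f : 'I_M -> 'rV[C]_N) (x : 'rV[C]_N) : 'rV[C]_M :=
  \row_(k < M) cdot x (f k).

Definition inW (f : 'I_M -> 'rV[C]_N) (a : 'rV[C]_M) : Prop :=
  exists x : 'rV[C]_N, a = coeffs f x.

Definition inL (S : {set 'I_M}) (a : 'rV[C]_M) : Prop :=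
  forall i, i \in S -> a 0 i = 0.

Definition spans (f : 'I_M -> 'rV[C]_N) (S : {set 'I_M}) : Prop :=
  (1%:M <= \sum_(j in S) <<f j>>)%MS.

Definition is_frame (f : 'I_M -> 'rV[C]_N) : Prop := spans f setT.

(* M^F is injective (up to a global unimodular phase) *)
Definition phase_retrieval_injective (f : 'I_M -> 'rV[C]_N) : Prop :=
  forall x y : 'rV[C]_N,
    (forall k, `|cdot x (f k)| = `|cdot y (f k)|) ->
    exists c : C, `|c| = 1 /\ y = c *: x.
End FrameDefs.

(* Main.v *)
Require Import Defs.
From HB Require Import structures.
From mathcomp Require Import all_boot all_order all_algebra.
From mathcomp Require Import reals.
From mathcomp.real_closed Require Import complex.
From Stdlib Require Import Classical.
Import Order.TTheory GRing.Theory Num.Theory.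
Local Open Scope ring_scope.

Section Aux.
Variables (R : realType) (N M : nat).
Local Notation C := R[i].
Implicit Types (x y z : 'rV[C]_N) (f : 'I_M -> 'rV[C]_N).

Lemma cdotD x y z : cdot (x + y) z = cdot x z + cdot y z.
Proof. rewrite /cdot -big_split; apply eq_bigr => k _; by rewrite mxE mulrDl. Qed.

Lemma cdotB x y z : cdot (x - y) z = cdot x z - cdot y z.
Proof. rewrite /cdot -sumrB; apply eq_bigr => k _; by rewrite !mxE mulrBl. Qed.

Lemma cdotZ (c : C) x z : cdot (c *: x) z = c * cdot x z.
Proof. rewrite /cdot mulr_sumr; apply eq_bigr => k _; by rewrite mxE mulrA. Qed.

Lemma part1 f : phase_retrieval_injective f ->
  forall S a b, inL S a -> inW f a -> a <> 0 -> inL (~: S) b -> inW f b -> b = 0.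
Proof.
move=> inj S a b La [x Ea] a0 Lb [y Eb]; subst a b.
case: (eqVneq (coeffs f y) 0) => // b0; exfalso.
have Lx k : k \in S -> cdot x (f k) = 0 by move=> kS; have := La k kS; rewrite mxE.
have Ly k : k \notin S -> cdot y (f k) = 0.
  by move=> kS; have := Lb k; rewrite mxE in_setC; apply.
have Habs k : `|cdot (x + y) (f k)| = `|cdot (x - y) (f k)|.
  rewrite cdotD cdotB; case: (boolP (k \in S)) => kS.
    by rewrite (Lx k kS) add0r sub0r normrN.
  by rewrite (Ly k kS) addr0 subr0.
have [c [_ Hc]] := inj (x + y) (x - y) Habs.
have Hk k : cdot x (f k) - cdot y (f k) = c * (cdot x (f k) + cdot y (f k)).
  by rewrite -cdotD -cdotB Hc cdotZ.
case: (pickP (fun k => cdot x (f k) != 0)) => [k kx | H]; last first.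
  apply: a0; apply/rowP => k'; rewrite !mxE; apply/eqP.
  by move/negbT: (H k'); rewrite negbK.
case: (pickP (fun k => cdot y (f k) != 0)) => [j jy | H]; last first.
  move/eqP: b0; apply; apply/rowP => k'; rewrite !mxE; apply/eqP.
  by move/negbT: (H k'); rewrite negbK.
have kS : k \notin S by apply/negP => kS; move: kx; rewrite (Lx k kS) eqxx.
have jS : j \in S by apply/negPn/negP => jS; move: jy; rewrite (Ly j jS) eqxx.
have c1 : c = 1.
  have := Hk k; rewrite (Ly k kS) subr0 addr0 => E.
  apply: (mulIf kx); by rewrite mul1r -E.
have := Hk j; rewrite (Lx j jS) c1 mul1r sub0r add0r => E.
have : cdot y (f j) *+ 2 == 0 by rewrite mulr2n -{1}E addNr.
by rewrite mulrn_eq0 /= (negbTE jy).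
Qed.

Definition FS f (S : {set 'I_M}) : 'M[C]_(M, N) :=
  \matrix_(k, j) (if k \in S then f k 0 j else 0).

Definition conjv x : 'rV[C]_N := \row_k (x 0 k)^*.

Lemma conjvK x : conjv (conjv x) = x.
Proof. by apply/rowP => k; rewrite !mxE conjCK. Qed.

Lemma FS_entry f S y j : (y *m (FS f S)^T) 0 j =
  if j \in S then (cdot (conjv y) (f j))^* else 0.
Proof.
rewrite !mxE /cdot; case: ifP => jS.
  rewrite rmorph_sum; apply eq_bigr => k _; by rewrite !mxE jS rmorphM /= !conjCK.
by rewrite big1 // => k _; rewrite !mxE jS mulr0.
Qed.

Lemma spansE f S : spans f S <-> row_full (FS f S).
Proof.
rewrite /spans; split => H.
  rewrite -sub1mx; apply: submx_trans H _.
  apply/sumsmx_subP => j jS; rewrite genmxE.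
  have -> : f j = row j (FS f S) by apply/rowP => k; rewrite !mxE jS.
  exact: row_sub.
rewrite -sub1mx in H; apply: submx_trans H _.
apply/row_subP => k; case: (boolP (k \in S)) => kS.
  have -> : row k (FS f S) = f k by apply/rowP => j; rewrite !mxE kS.
  by apply: (sumsmx_sup k) => //; rewrite genmxE.
have -> : row k (FS f S) = 0 by apply/rowP => j; rewrite !mxE (negbTE kS).
exact: sub0mx.
Qed.

Lemma frame0 f : is_frame f -> forall x, (forall k, cdot x (f k) = 0) -> x = 0.
Proof.
move=> /spansE Hf x Hx.
have Hy : conjv x *m (FS f setT)^T = 0.
  by apply/rowP => j; rewrite FS_entry in_setT conjvK Hx rmorph0 mxE.
move/sub_kermxP: Hy => Hy.
have : kermx (FS f setT)^T = 0.
  apply/eqP; rewrite -mxrank_eq0 mxrank_ker mxrank_tr.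
  by move: Hf; rewrite /row_full => /eqP ->; rewrite subnn.
move=> K; move: Hy; rewrite K submx0 => /eqP H.
by rewrite -(conjvK x) H; apply/rowP => k; rewrite !mxE rmorph0.
Qed.

Lemma ortho f S : ~ spans f S ->
  exists x, x <> 0 /\ forall j, j \in S -> cdot x (f j) = 0.
Proof.
move=> nS.
have lt : (\rank (FS f S) < N)%N.
  rewrite ltn_neqAle rank_leq_col andbT; apply/negP => /eqP E.
  by apply: nS; apply/spansE; rewrite /row_full E.
set K := kermx (FS f S)^T.
have K0 : K != 0.
  by rewrite -mxrank_eq0 /K mxrank_ker mxrank_tr -lt0n subn_gt0.
have [i Ki] : exists i, row i K != 0.
  case: (pickP (fun i => row i K != 0)) => [i Hi | H]; first by exists i.
  move: K0; rewrite (_ : K = 0) ?eqxx //; apply/row_matrixP => i.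
  by move/negbT: (H i); rewrite negbK => /eqP ->; rewrite row0.
have Hy : row i K *m (FS f S)^T = 0 by apply/sub_kermxP; exact: row_sub.
exists (conjv (row i K)); split.
  move=> E; move: Ki; rewrite -(conjvK (row i K)) E.
  by rewrite (_ : conjv 0 = 0) ?eqxx //; apply/rowP => k; rewrite !mxE rmorph0.
move=> j jS; move/rowP: Hy => /(_ j); rewrite FS_entry jS mxE.
by move/eqP; rewrite conjC_eq0 => /eqP.
Qed.

End Aux.

Theorem proposition3p5 (R : realType) (N M : nat) (f : 'I_M -> 'rV[R[i]]_N) :
  is_frame f -> phase_retrieval_injective f ->
  (forall S : {set 'I_M},
     (exists a, inL S a /\ inW f a /\ a <> 0) ->
     (forall a, inL (~: S) a -> inW f a -> a = 0))
  /\
  (forall S : {set 'I_M}, spans f S \/ spans f (~: S)).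
Proof.
move=> fr inj; have P1 := @part1 R N M f inj; split.
  by move=> S [a [La [Wa a0]]] b Lb Wb; exact: (P1 S a b).
move=> S; case: (classic (spans f S)) => [|nS]; first by left.
case: (classic (spans f (~: S))) => [|nS']; first by right.
exfalso.
have [x [x0 Hx]] := @ortho R N M f S nS; have [y [y0 Hy]] := @ortho R N M f _ nS'.
have Wx : inW f (coeffs f x) by exists x.
have Wy : inW f (coeffs f y) by exists y.
have Lx : inL S (coeffs f x) by move=> k kS; rewrite mxE Hx.
have Ly : inL (~: S) (coeffs f y) by move=> k kS; rewrite mxE Hy.
have a0 : coeffs f x <> 0.
  move=> E; apply: x0; apply: frame0 fr _ _ => k.
  by move/rowP: E => /(_ k); rewrite !mxE.
apply: y0; apply: frame0 fr _ _ => k.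
have E := P1 S (coeffs f x) (coeffs f y) Lx Wx a0 Ly Wy.
move/rowP: E => /(_ k).
by rewrite !mxE.
Qed.
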